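(* Let $(\mathfrak g,[\cdot,\cdot],\alpha,\varepsilon)$ be a color Hom-Lie algebra and $\theta$ an even element of the centroid of $\mathfrak g$. Define even brackets $[x,y]_1^\theta=[\theta(x),y]$ and $[x,y]_2^\theta=[\theta(x),\theta(y)]$. Then each of the following is a color Hom-Lie algebra: (i) $(\mathfrak g,[\cdot,\cdot],\theta\circ\alpha,\varepsilon)$, $(\mathfrak g,[\cdot,\cdot]_1^\theta,\theta\circ\alpha,\varepsilon)$, $(\mathfrak g,[\cdot,\cdot]_2^\theta,\theta\circ\alpha,\varepsilon)$; (ii) $(\mathfrak g,[\cdot,\cdot],\alpha\circ\theta,\varepsilon)$, $(\mathfrak g,[\cdot,\cdot]_1^\theta,\alpha\circ\theta,\varepsilon)$, $(\mathfrak g,[\cdot,\cdot]_2^\theta,\alpha\circ\theta,\varepsilon)$.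
   Context: $\mathbb K$ is a field of characteristic zero and $\Gamma$ an abelian group. A bicharacter is a map $\varepsilon:\Gamma\times\Gamma\to\mathbb K\setminus\{0\}$ with $\varepsilon(a,b)\varepsilon(b,a)=1$, $\varepsilon(a,b+c)=\varepsilon(a,b)\varepsilon(a,c)$, $\varepsilon(a+b,c)=\varepsilon(a,c)\varepsilon(b,c)$; for homogeneous $x,y$, $\varepsilon(x,y)$ means $\varepsilon(\deg x,\deg y)$. Even maps preserve degree. A color Hom-Lie algebra $(\mathfrak g,[\cdot,\cdot],\alpha,\varepsilon)$ is a $\Gamma$-graded vector space with even bilinear bracket and even linear $\alpha$ such that, for homogeneous $x,y,z$, $[x,y]=-\varepsilon(x,y)[y,x]$ and $\varepsilon(z,x)[\alpha(x),[y,z]]+\varepsilon(x,y)[\alpha(y),[z,x]]+\varepsilon(y,z)[\alpha(z),[x,y]]=0$. The centroid of $\mathfrak g$ is the set of homogeneous linear maps $\theta:\mathfrak g\to\mathfrak g$ (and their sums) with $\theta([x,y])=[\theta(x),y]=\varepsilon(\theta,x)[x,\theta(y)]$ for all homogeneous $x,y$; for even $\theta$ this reads $\theta([x,y])=[\theta(x),y]=[x,\theta(y)]$. *)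

(* Defs.v *)
From HB Require Import structures.
From mathcomp Require Import all_boot all_order all_algebra.
Set Implicit Arguments.
Unset Strict Implicit.
Unset Printing Implicit Defensive.
Import GRing.Theory.
Local Open Scope ring_scope.

Definition bicharacter (G : zmodType) (K : fieldType) (eps : G -> G -> K) : Prop :=
  [/\ forall a b, eps a b != 0,
      forall a b, eps a b * eps b a = 1,
      forall a b c, eps a (b + c) = eps a b * eps a c &
      forall a b c, eps (a + b) c = eps a c * eps b c].

(* V is Gamma-graded: V = (+)_{g in Gamma} Vg g, with each Vg g a subspace. *)
Definition graded (G : zmodType) (K : fieldType) (V : lmodType K)
    (Vg : G -> {pred V}) : Prop :=
  [/\ forall g, 0 \in Vg g,
      forall g (k : K) (x y : V), x \in Vg g -> y \in Vg g -> k *: x + y \in Vg g,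
      forall v : V, exists (s : seq G) (x : G -> V),
          [/\ uniq s, forall g, x g \in Vg g & v = \sum_(g <- s) x g] &
      forall (s : seq G) (x : G -> V), uniq s -> (forall g, x g \in Vg g) ->
          \sum_(g <- s) x g = 0 -> forall g, g \in s -> x g = 0].

Definition linear_map (K : fieldType) (V : lmodType K) (f : V -> V) : Prop :=
  forall (k : K) (x y : V), f (k *: x + y) = k *: f x + f y.

Definition bilinear_map (K : fieldType) (V : lmodType K) (br : V -> V -> V) : Prop :=
  forall z : V, linear_map (br z) /\ linear_map (fun x => br x z).

Definition even_map (G : zmodType) (K : fieldType) (V : lmodType K)
    (Vg : G -> {pred V}) (f : V -> V) : Prop :=
  forall g x, x \in Vg g -> f x \in Vg g.

Definition even_bracket (G : zmodType) (K : fieldType) (V : lmodType K)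
    (Vg : G -> {pred V}) (br : V -> V -> V) : Prop :=
  forall a b x y, x \in Vg a -> y \in Vg b -> br x y \in Vg (a + b).

Definition colorHomLie (G : zmodType) (K : fieldType) (V : lmodType K)
    (Vg : G -> {pred V}) (eps : G -> G -> K) (br : V -> V -> V) (alpha : V -> V)
    : Prop :=
  [/\ graded Vg /\ bicharacter eps,
      bilinear_map br /\ even_bracket Vg br,
      linear_map alpha /\ even_map Vg alpha,
      forall a b x y, x \in Vg a -> y \in Vg b -> br x y = - (eps a b *: br y x) &
      forall a b c x y z, x \in Vg a -> y \in Vg b -> z \in Vg c ->
        eps c a *: br (alpha x) (br y z) + eps a b *: br (alpha y) (br z x)
          + eps b c *: br (alpha z) (br x y) = 0].

Definition even_centroid (G : zmodType) (K : fieldType) (V : lmodType K)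
    (Vg : G -> {pred V}) (br : V -> V -> V) (theta : V -> V) : Prop :=
  [/\ linear_map theta, even_map Vg theta &
      forall a b x y, x \in Vg a -> y \in Vg b ->
        theta (br x y) = br (theta x) y /\ br (theta x) y = br x (theta y)].

Definition bracket1 (V : Type) (br : V -> V -> V) (theta : V -> V) : V -> V -> V :=
  fun x y => br (theta x) y.

Definition bracket2 (V : Type) (br : V -> V -> V) (theta : V -> V) : V -> V -> V :=
  fun x y => br (theta x) (theta y).

(* Main.v *)
Require Import Defs.
From HB Require Import structures.
From mathcomp Require Import all_boot all_order all_algebra.
Import GRing.Theory.
Local Open Scope ring_scope.

Lemma lin_aux {M : zmodType} {a b c p q r : M} :
  a + q + r = 0 -> p + b + r = 0 -> p + q + c = 0 -> p + q + r = 0 -> a + b + c = 0.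
Proof.
move=> h1 h2 h3 h0.
have ea : a = p by apply: (addIr (q + r)); rewrite addrA h1 addrA h0.
have eb : b = q by apply: (addrI p); apply: (addIr r); rewrite h2 h0.
have ec : c = r by apply: (addrI (p + q)); rewrite h3 h0.
by rewrite ea eb ec.
Qed.

Section S.
Variables (K : fieldType) (G : zmodType) (V : lmodType K)
    (Vg : G -> {pred V}) (eps : G -> G -> K) (br : V -> V -> V)
    (alpha theta : V -> V).
Hypothesis HL : colorHomLie Vg eps br alpha.
Hypothesis HC : even_centroid Vg br theta.

Definition hom (u : V) := exists a, u \in Vg a.

Lemma linD {f : V -> V} : linear_map f -> forall u v, f (u + v) = f u + f v.
Proof. by move=> lin u v; rewrite -[u in LHS]scale1r lin scale1r. Qed.
Lemma lin0 {f : V -> V} : linear_map f -> f 0 = 0.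
Proof.
move=> lin; have h := linD lin 0 0; rewrite addr0 in h.
by apply: (addrI (f 0)); rewrite addr0 -h.
Qed.
Lemma linZ {f : V -> V} : linear_map f -> forall k u, f (k *: u) = k *: f u.
Proof. by move=> lin k u; have := lin k u 0; rewrite addr0 lin0 // addr0. Qed.
Lemma linN {f : V -> V} : linear_map f -> forall u, f (- u) = - f u.
Proof. by move=> lin u; rewrite -scaleN1r linZ // scaleN1r. Qed.

Lemma thlin : linear_map theta. Proof. by case: HC. Qed.
Lemma allin : linear_map alpha. Proof. by case: HL => _ _ [] . Qed.
Lemma brbil : bilinear_map br. Proof. by case: HL => _ [] . Qed.

Lemma mth {g x} : x \in Vg g -> theta x \in Vg g. Proof. by case: HC => _ h _; apply: h. Qed.
Lemma mal {g x} : x \in Vg g -> alpha x \in Vg g. Proof. by case: HL => _ _ [_ h] _ _; apply: h. Qed.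
Lemma mbr {a b x y} : x \in Vg a -> y \in Vg b -> br x y \in Vg (a + b).
Proof. by case: HL => _ [_ h] _ _ _; apply: h. Qed.

Lemma hom_th u : hom u -> hom (theta u). Proof. by case=> a h; exists a; apply: mth. Qed.
Lemma hom_al u : hom u -> hom (alpha u). Proof. by case=> a h; exists a; apply: mal. Qed.
Lemma hom_br u v : hom u -> hom v -> hom (br u v).
Proof. by case=> a h [b h']; exists (a + b); apply: mbr. Qed.

Lemma thl u v : hom u -> hom v -> br (theta u) v = theta (br u v).
Proof. by case: HC => _ _ h [a hu] [b hv]; case: (h a b u v hu hv). Qed.
Lemma thr u v : hom u -> hom v -> br u (theta v) = theta (br u v).
Proof. by case: HC => _ _ h [a hu] [b hv]; case: (h a b u v hu hv) => -> ->. Qed.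

Lemma skew {a b x y} : x \in Vg a -> y \in Vg b -> br x y = - (eps a b *: br y x).
Proof. by case: HL => _ _ _ h _; apply: h. Qed.
Lemma jac {a b c x y z} : x \in Vg a -> y \in Vg b -> z \in Vg c ->
        eps c a *: br (alpha x) (br y z) + eps a b *: br (alpha y) (br z x)
          + eps b c *: br (alpha z) (br x y) = 0.
Proof. by case: HL => _ _ _ _ h; apply: h. Qed.

Ltac hs := solve [repeat (apply: hom_br || apply: hom_th || apply: hom_al); assumption].

Lemma thcomb (k1 k2 k3 : K) u v w :
  k1 *: theta u + k2 *: theta v + k3 *: theta w = theta (k1 *: u + k2 *: v + k3 *: w).
Proof. by rewrite !(linD thlin) !(linZ thlin). Qed.

Lemma jac_ta a b c x y z : x \in Vg a -> y \in Vg b -> z \in Vg c ->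
        eps c a *: br ((theta \o alpha) x) (br y z) + eps a b *: br ((theta \o alpha) y) (br z x)
          + eps b c *: br ((theta \o alpha) z) (br x y) = 0.
Proof.
move=> Hx Hy Hz.
have hx : hom x by exists a. have hy : hom y by exists b. have hz : hom z by exists c.
rewrite /= !thl; try hs.
by rewrite thcomb (jac Hx Hy Hz) (lin0 thlin).
Qed.

Lemma jac_at a b c x y z : x \in Vg a -> y \in Vg b -> z \in Vg c ->
        eps c a *: br ((alpha \o theta) x) (br y z) + eps a b *: br ((alpha \o theta) y) (br z x)
          + eps b c *: br ((alpha \o theta) z) (br x y) = 0.
Proof.
move=> Hx Hy Hz.
have hx : hom x by exists a. have hy : hom y by exists b. have hz : hom z by exists c.
have J1 := jac (mth Hx) Hy Hz.
have J2 := jac Hx (mth Hy) Hz.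
have J3 := jac Hx Hy (mth Hz).
have J0 := jac Hx Hy Hz.
have J0' : theta (eps c a *: br (alpha x) (br y z) + eps a b *: br (alpha y) (br z x)
          + eps b c *: br (alpha z) (br x y)) = 0 by rewrite J0 (lin0 thlin).
rewrite -thcomb in J0'.
rewrite !thl in J1 J2 J3; try hs.
rewrite !thr in J1 J2 J3; try hs.
rewrite /=.
by have := lin_aux J1 J2 J3 J0'.
Qed.

Definition jacobi (bb : V -> V -> V) (al : V -> V) := forall a b c x y z,
  x \in Vg a -> y \in Vg b -> z \in Vg c ->
        eps c a *: bb (al x) (bb y z) + eps a b *: bb (al y) (bb z x)
          + eps b c *: bb (al z) (bb x y) = 0.

Lemma jac_brack {al : V -> V} : (forall u, hom u -> hom (al u)) -> jacobi br al ->
  jacobi (bracket1 br theta) al /\ jacobi (bracket2 br theta) al.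
Proof.
move=> Hal J; split=> a b c x y z Hx Hy Hz;
have hx : hom x by exists a.
all: have hy : hom y by exists b.
all: have hz : hom z by exists c.
all: rewrite /bracket1 /bracket2.
all: repeat (rewrite thl; [|solve [repeat (apply: hom_br || apply: hom_th || apply: Hal); assumption]..]
          || rewrite thr; [|solve [repeat (apply: hom_br || apply: hom_th || apply: Hal); assumption]..]).
all: rewrite !thcomb (J _ _ _ _ _ _ Hx Hy Hz).
all: by rewrite !(lin0 thlin).
Qed.

Lemma lin_comp {f g : V -> V} : linear_map f -> linear_map g -> linear_map (f \o g).
Proof. by move=> lf lg k u v; rewrite /= lg lf. Qed.

Lemma even_comp {f g : V -> V} : even_map Vg f -> even_map Vg g -> even_map Vg (f \o g).
Proof. by move=> ef eg h u hu; apply: ef; apply: eg. Qed.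

Lemma bil1 : bilinear_map (bracket1 br theta).
Proof.
move=> z; split=> k u v; rewrite /bracket1.
  by case: (brbil (theta z)) => -> _.
by rewrite thlin; case: (brbil z) => _ ->.
Qed.

Lemma bil2 : bilinear_map (bracket2 br theta).
Proof.
move=> z; split=> k u v; rewrite /bracket2.
  by rewrite thlin; case: (brbil (theta z)) => -> _.
by rewrite thlin; case: (brbil (theta z)) => _ ->.
Qed.

Lemma eb0 : even_bracket Vg br.
Proof. by move=> a b x y; apply: mbr. Qed.
Lemma eb1 : even_bracket Vg (bracket1 br theta).
Proof. by move=> a b x y hx hy; apply: mbr => //; apply: mth. Qed.
Lemma eb2 : even_bracket Vg (bracket2 br theta).
Proof. by move=> a b x y hx hy; apply: mbr; apply: mth. Qed.

Lemma skew1 a b x y : x \in Vg a -> y \in Vg b ->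
  bracket1 br theta x y = - (eps a b *: bracket1 br theta y x).
Proof.
move=> Hx Hy; have hx : hom x by exists a.
have hy : hom y by exists b.
rewrite /bracket1 !thl // (skew Hx Hy).
by rewrite (linN thlin) (linZ thlin).
Qed.

Lemma skew2 a b x y : x \in Vg a -> y \in Vg b ->
  bracket2 br theta x y = - (eps a b *: bracket2 br theta y x).
Proof. by move=> Hx Hy; rewrite /bracket2 (skew (mth Hx) (mth Hy)). Qed.

Lemma evth : even_map Vg theta. Proof. by case: HC. Qed.
Lemma eval : even_map Vg alpha. Proof. by case: HL => _ _ []. Qed.
Lemma gb : graded Vg /\ bicharacter eps. Proof. by case: HL. Qed.

Lemma main_all :
  (colorHomLie Vg eps br (theta \o alpha)
   /\ colorHomLie Vg eps (bracket1 br theta) (theta \o alpha)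
   /\ colorHomLie Vg eps (bracket2 br theta) (theta \o alpha))
  /\
  (colorHomLie Vg eps br (alpha \o theta)
   /\ colorHomLie Vg eps (bracket1 br theta) (alpha \o theta)
   /\ colorHomLie Vg eps (bracket2 br theta) (alpha \o theta)).
Proof.
have hta : forall u, hom u -> hom ((theta \o alpha) u).
  by move=> u hu; apply: hom_th; apply: hom_al.
have hat : forall u, hom u -> hom ((alpha \o theta) u).
  by move=> u hu; apply: hom_al; apply: hom_th.
have Jta : jacobi br (theta \o alpha) by move=> *; apply: jac_ta.
have Jat : jacobi br (alpha \o theta) by move=> *; apply: jac_at.
have [J1ta J2ta] := jac_brack hta Jta.
have [J1at J2at] := jac_brack hat Jat.
have Lta := lin_comp thlin allin.
have Lat := lin_comp allin thlin.
have Eta := even_comp evth eval.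
have Eat := even_comp eval evth.
have S0 : forall a b x y, x \in Vg a -> y \in Vg b -> br x y = - (eps a b *: br y x).
  by move=> *; apply: skew.
split; (split; [|split]); split; try exact: gb; try (by split);
  try exact: S0; try exact: skew1; try exact: skew2; try done.
all: try (split; [exact: brbil|exact: eb0]).
all: try (split; [exact: bil1|exact: eb1]).
all: try (split; [exact: bil2|exact: eb2]).
Qed.

End S.


Theorem mainTheorem3 (K : fieldType) (G : zmodType) (V : lmodType K)
    (Vg : G -> {pred V}) (eps : G -> G -> K) (br : V -> V -> V)
    (alpha theta : V -> V) :
  [pchar K] =i pred0 ->
  colorHomLie Vg eps br alpha ->
  even_centroid Vg br theta ->
  (* (i) *)
  (colorHomLie Vg eps br (theta \o alpha)
   /\ colorHomLie Vg eps (bracket1 br theta) (theta \o alpha)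
   /\ colorHomLie Vg eps (bracket2 br theta) (theta \o alpha))
  /\
  (* (ii) *)
  (colorHomLie Vg eps br (alpha \o theta)
   /\ colorHomLie Vg eps (bracket1 br theta) (alpha \o theta)
   /\ colorHomLie Vg eps (bracket2 br theta) (alpha \o theta)).
Proof. by move=> _ HL HC; apply: main_all. Qed.
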